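(* Consider the directed square lattice on $\{1,\dots,n\}^2$ with random nonzero vertex weights $w_u$ and random nonzero edge weights $w_{u,v}$, and let $X_u=\log|w_u|$, $X_e=\log|w_e|$. Suppose there is $t>0$ and $M<\infty$ such that $\mathbb{E}e^{-tX_u},\mathbb{E}e^{tX_u}\le M$ for all vertices $u$ and all $n$, and likewise for edges. Define modified weights by $w'_{u,v}=w_{u,v}\,w_v$ for each edge $(u,v)$ and $w'_u=1$ for each vertex $u$, and let $Z^{(k)\prime}_{S,T}$ be the quantity $Z^{(k)}_{S,T}$ computed with the modified weights. Then for any $k\geq1$, $\delta>0$ and all $S,T$, \[ \mathbb{P}\left(n^{-1/3}\left|\log|Z^{(k)}_{S,T}|-\log|Z^{(k)\prime}_{S,T}|\right|>\delta\right)\to 0 \quad (n\to\infty). \]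
   Context: The directed square lattice has vertex set $\{1,\dots,n\}^2$ and directed edges $(i,j)\to(i+1,j)$, $(i,j)\to(i,j+1)$. A path $\pi=(u_1\to\dots\to u_m)$ (length zero allowed) has weight $\mathrm{wt}(\pi)=\prod_{i=1}^{m-1}w_{u_i,u_{i+1}}\prod_{i=1}^m w_{u_i}$. For sequences $S=(u_1,\dots,u_k)$, $T=(v_1,\dots,v_k)$ of distinct vertices, $Z^{(k)}_{S,T}=\sum_\pi \mathrm{sgn}(\sigma(\pi))\prod_{i=1}^k\mathrm{wt}(\pi_i)$, summed over $k$-tuples of pairwise vertex-disjoint paths with $\pi_i$ from $u_i$ to $v_{\sigma(i)}$ for a permutation $\sigma=\sigma(\pi)$. Edge weights need not be independent, only independent along every path. *)

(* Defs.v *)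
From HB Require Import structures.
From mathcomp Require Import all_boot all_order all_algebra all_fingroup.
From mathcomp Require Import all_classical all_reals all_analysis.
Set Implicit Arguments. Unset Strict Implicit. Unset Printing Implicit Defensive.
Import Order.TTheory GRing.Theory Num.Theory.
Local Open Scope ring_scope.

(* Vertices of the directed square lattice of side n, 0-indexed:
   (i,j) : 'I_n * 'I_n stands for the vertex (i+1, j+1) of {1..n}^2. *)
Definition vtx (n : nat) : finType := ('I_n * 'I_n)%type.

Definition lstep (n : nat) (u v : vtx n) : bool :=
  (((v.1 : nat) == (u.1 : nat).+1) && ((v.2 : nat) == (u.2 : nat)))
  || (((v.1 : nat) == (u.1 : nat)) && ((v.2 : nat) == (u.2 : nat).+1)).

(* Finite type of candidate vertex sequences of length between 1 and 2n.
   Every directed lattice path in {1..n}^2 has at most 2n-1 vertices,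
   so all lattice paths are represented (injectively) here. *)
Definition ptype (n : nat) : finType := {m : 'I_(2 * n) & m.+1.-tuple (vtx n)}.

Definition pseq (n : nat) (p : ptype n) : seq (vtx n) := tval (tagged p).

Definition is_lpath (n : nat) (u v : vtx n) (s : seq (vtx n)) : bool :=
  if s is x :: s' then [&& x == u, path (@lstep n) x s' & last x s' == v]
  else false.

Definition path_wt (R : pzRingType) (n : nat) (we : vtx n -> vtx n -> R)
  (wv : vtx n -> R) (s : seq (vtx n)) : R :=
  (\prod_(e <- zip s (behead s)) we e.1 e.2) * \prod_(x <- s) wv x.

Definition Zk (R : pzRingType) (n k : nat) (we : vtx n -> vtx n -> R)
  (wv : vtx n -> R) (S T : 'I_k -> vtx n) : R :=
  \sum_(s : 'S_k)
    \sum_(P : {ffun 'I_k -> ptype n} |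
            [forall i, is_lpath (S i) (T (s i)) (pseq (P i))] &&
            [forall i, forall j, (i != j) ==>
               all (fun x => x \notin pseq (P j)) (pseq (P i))])
      (-1) ^+ s * \prod_(i < k) path_wt we wv (pseq (P i)).

Definition mod_we (R : pzRingType) (n : nat) (we : vtx n -> vtx n -> R)
  (wv : vtx n -> R) : vtx n -> vtx n -> R := fun u v => we u v * wv v.
Definition mod_wv (R : pzRingType) (n : nat) : vtx n -> R := fun _ => 1.

(* Main.v *)
Require Import Defs.
From HB Require Import structures.
From mathcomp Require Import all_boot all_order all_algebra all_fingroup.
From mathcomp Require Import all_classical all_reals all_analysis.
From mathcomp Require Import measurable_realfun.
From mathcomp Require Import ring.
Import Order.TTheory GRing.Theory Num.Theory.
Local Open Scope ring_scope.
Local Open Scope classical_set_scope.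

Lemma prod_zip_snd (R : comPzRingType) (V : Type) (f : V -> R) (x : V) (s : seq V) :
  \prod_(e <- zip (x :: s) s) f e.2 = \prod_(y <- s) f y.
Proof.
elim: s x => [|y s IH] x; first by rewrite !big_nil.
by rewrite /= !big_cons /= IH.
Qed.

Lemma path_wt_mod (R : comPzRingType) (n : nat) (we : vtx n -> vtx n -> R)
  (wv : vtx n -> R) u v s : is_lpath u v s ->
  path_wt we wv s = wv u * path_wt (mod_we we wv) (@mod_wv R n) s.
Proof.
case: s => [//|x s] /and3P[/eqP -> _ _].
rewrite /path_wt /mod_we /mod_wv /= big_split /= prod_zip_snd.
rewrite [X in _ * (_ * X)]big1 // big_cons.
by rewrite mulr1 mulrCA.
Qed.

Lemma Zk_fact (R : comPzRingType) (n k : nat) (we : vtx n -> vtx n -> R)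
  (wv : vtx n -> R) (S T : 'I_k -> vtx n) :
  Zk we wv S T = (\prod_(i < k) wv (S i)) * Zk (mod_we we wv) (@mod_wv R n) S T.
Proof.
rewrite /Zk mulr_sumr; apply: eq_bigr => s _; rewrite mulr_sumr.
apply: eq_bigr => PP /andP[/forallP Hp _].
rewrite mulrCA -big_split /=; congr (_ * _); apply: eq_bigr => i _.
exact: path_wt_mod (Hp i).
Qed.

Lemma path_zip_rel (V : eqType) (r : rel V) x s :
  path r x s -> forall e, e \in zip (x :: s) s -> r e.1 e.2.
Proof.
elim: s x => [|y s IH] x //= /andP[rxy ps] e.
rewrite inE => /orP[/eqP -> //|]; exact: IH.
Qed.

Lemma path_wt_meas (R : realType) (d : measure_display) (Omega : measurableType d)
  (m : nat) (we : Omega -> vtx m -> vtx m -> R) (wv : Omega -> vtx m -> R) u v s :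
  (forall u, measurable_fun setT (fun w => wv w u)) ->
  (forall u v, lstep u v -> measurable_fun setT (fun w => we w u v)) ->
  is_lpath u v s -> measurable_fun setT (fun w => path_wt (we w) (wv w) s).
Proof.
move=> mv me; case: s => [//|x s] /and3P[_ ps _].
rewrite /path_wt; apply: measurable_funM.
  apply: measurable_prod => e /(@path_zip_rel _ _ _ _ ps) /me; exact.
by apply: measurable_prod => y _; exact: mv.
Qed.

Lemma measurable_sum_cond (R : realType) (d : measure_display) (Omega : measurableType d)
  (I : finType) (Pr : pred I) (h : I -> Omega -> R) :
  (forall i, Pr i -> measurable_fun setT (h i)) ->
  measurable_fun setT (fun x => \sum_(i | Pr i) h i x).
Proof.
move=> mh.
have -> : (fun x => \sum_(i | Pr i) h i x) =
  (fun x => \sum_(i <- index_enum I) (if Pr i then h i x else 0)).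
  by apply/funext => x; exact: big_mkcond.
apply: measurable_sum => i; case Pi: (Pr i); [exact: mh | exact: measurable_cst].
Qed.

Lemma Zk_meas (R : realType) (d : measure_display) (Omega : measurableType d)
  (m k : nat) (we : Omega -> vtx m -> vtx m -> R) (wv : Omega -> vtx m -> R)
  (S T : 'I_k -> vtx m) :
  (forall u, measurable_fun setT (fun w => wv w u)) ->
  (forall u v, lstep u v -> measurable_fun setT (fun w => we w u v)) ->
  measurable_fun setT (fun w => Zk (we w) (wv w) S T).
Proof.
move=> mv me; rewrite /Zk; apply: measurable_sum => s.

apply: measurable_sum_cond => PP /andP[/forallP Hp _].
apply: measurable_funM; first exact: measurable_cst.
apply: measurable_prod => i _; exact: path_wt_meas (Hp i).
Qed.

Lemma tail_bound (R : realType) (d : measure_display) (Omega : measurableType d)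
  (P : probability Omega R) (X : Omega -> R) (t M a : R) :
  measurable_fun setT X -> 0 < t -> 0 < a ->
  (\int[P]_w (expR (- t * X w))%:E <= M%:E)%E ->
  (\int[P]_w (expR (t * X w))%:E <= M%:E)%E ->
  measurable [set w | (a <= `|X w|)%R] /\
  (P [set w | (a <= `|X w|)%R] <= ((2 * M * expR (- (t * a)))%R)%:E)%E.
Proof.
move=> mX t0 a0 HM1 HM2.
have mnX : measurable_fun setT (fun w => `|X w|%R).
  by apply: measurableT_comp => //; exact: normr_measurable.
have mA : measurable [set w | (a <= `|X w|)%R].
  have := mnX measurableT _ (measurable_itv `[a, +oo[%R); rewrite setTI.
  congr measurable; apply/seteqP; split => w /=; rewrite in_itv /= andbT //.
split => //.
have mf : measurable_fun [set: R] (fun x => expR (t * x)).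
  apply: measurableT_comp; first exact: measurable_expR.
  exact: mulrl_measurable.
have f0 : forall r : \bar R, (0 <= r)%E -> (0 <= er_map (fun x => expR (t * x)) r)%E.
  by case => [r||] //= _; rewrite lee_fin expR_ge0.
have fnd : forall x y : \bar R, (x <= y)%E ->
    (er_map (fun x => expR (t * x)) x <= er_map (fun x => expR (t * x)) y)%E.
  move=> x y; case: x => [x||]; case: y => [y||] //=; rewrite ?lee_fin ?leey ?leNye //.
  by move=> xy; rewrite ler_expR ler_pM2l.
have mg : measurable_fun setT (EFin \o X) by exact/measurable_EFinP.
have := le_integral_comp_abse P measurableT (measurable_er_map Omega mf) f0 (fun x y _ _ => fnd x y) mg a0.
rewrite setTI /=.
rewrite (_ : [set x | a%:E <= `|X x|%:E]%E = [set w | (a <= `|X w|)%R]); last first.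
  by apply/seteqP; split => w /=; rewrite lee_fin.
move=> H1.
have mE : forall c, measurable_fun setT (fun x => (expR (c * X x))%:E).
  move=> c; apply/measurable_EFinP.
  exact: (measurableT_comp (@measurable_expR R) (measurableT_comp (@mulrl_measurable _ setT c) mX)).
have H2 : (\int[P]_x (expR (t * `|X x|))%:E <= (M + M)%:E)%E.
  have h0 : forall x, setT x -> (0 <= (expR (t * `|X x|))%:E)%E.
    by move=> x _; rewrite lee_fin expR_ge0.
  have h1 : measurable_fun setT (fun x => (expR (t * `|X x|))%:E).
    apply/measurable_EFinP.
    exact: (measurableT_comp (@measurable_expR R) (measurableT_comp (@mulrl_measurable _ setT t) mnX)).
  have h2 : measurable_fun setT
      (fun x => ((expR (t * X x))%:E + (expR (- t * X x))%:E)%E).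
    exact: emeasurable_funD.
  have h3 : forall x, setT x -> ((expR (t * `|X x|))%:E <=
      (expR (t * X x))%:E + (expR (- t * X x))%:E)%E.
    move=> x _; rewrite -EFinD lee_fin.
    have [x0|x0] := leP 0 (X x).
      by rewrite ger0_norm // lerDl expR_ge0.
    by rewrite ltr0_norm // mulrN mulNr lerDr expR_ge0.
  apply: (le_trans (ge0_le_integral P measurableT h0 h1 h2 h3)).
  have g0 : forall c, forall x, setT x -> (0 <= (expR (c * X x))%:E)%E.
    by move=> c x _; rewrite lee_fin expR_ge0.
  rewrite (ge0_integralD P measurableT (g0 t) (mE t) (g0 (- t)) (mE (- t))).
  by rewrite EFinD leeD.
have H3 : (P [set w | (a <= `|X w|)%R] <= (expR (t * a))^-1%:E * (M + M)%:E)%E.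
  by rewrite lee_pdivlMl ?expR_gt0 //; exact: le_trans H1 H2.
apply: (le_trans H3); rewrite -EFinM lee_fin expRN.
by rewrite le_eqVlt; apply/orP; left; apply/eqP; ring.
Qed.

Lemma ln_prod (R : realType) (I : Type) (s : seq I) (f : I -> R) :
  (forall i, 0 < f i) -> ln (\prod_(i <- s) f i) = \sum_(i <- s) ln (f i).
Proof.
move=> fpos; elim: s => [|x s IH]; first by rewrite !big_nil ln1.
rewrite !big_cons lnM ?IH // posrE //.
by apply: prodr_gt0 => i _.
Qed.

Lemma diff_bound (R : realType) (k : nat) (c : 'I_k -> R) (Z : R) :
  (forall i, c i != 0) ->
  `| ln `|(\prod_(i < k) c i) * Z| - ln `|Z| | <= \sum_(i < k) `|ln `|c i| |.
Proof.
move=> nz; have [->|Z0] := eqVneq Z 0.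
  by rewrite mulr0 normr0 subrr normr0; apply: sumr_ge0 => i _.
rewrite normrM normr_prod lnM ?posrE ?normr_gt0 //; last first.
  by apply: prodr_gt0 => i _; rewrite normr_gt0.
rewrite addrK ln_prod; last by move=> i; rewrite normr_gt0.
exact: ler_norm_sum.
Qed.

Theorem proposition3p2 (R : realType) (d : measure_display) (Omega : measurableType d)
  (P : probability Omega R)
  (wv : forall n : nat, Omega -> vtx n.+1 -> R)
  (we : forall n : nat, Omega -> vtx n.+1 -> vtx n.+1 -> R)
  (t M : R) (k : nat) (delta : R)
  (S T : forall n : nat, 'I_k -> vtx n.+1) :
  (forall n u, measurable_fun setT (fun w => wv n w u)) ->
  (forall n u v, lstep u v -> measurable_fun setT (fun w => we n w u v)) ->
  (forall n w u, wv n w u != 0) ->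
  (forall n w u v, lstep u v -> we n w u v != 0) ->
  0 < t ->
  (forall n u,
     (\int[P]_w (expR (- t * ln `|wv n w u|))%:E <= M%:E)%E /\
     (\int[P]_w (expR (t * ln `|wv n w u|))%:E <= M%:E)%E) ->
  (forall n u v, lstep u v ->
     (\int[P]_w (expR (- t * ln `|we n w u v|))%:E <= M%:E)%E /\
     (\int[P]_w (expR (t * ln `|we n w u v|))%:E <= M%:E)%E) ->
  (1 <= k)%N -> 0 < delta ->
  (\forall n \near \oo, injective (S n) /\ injective (T n)) ->
  (fun n : nat => P [set w | delta <
      (n.+1%:R : R) `^ (- 3^-1) *
      `| ln `|Zk (we n w) (wv n w) (S n) (T n)|
         - ln `|Zk (mod_we (we n w) (wv n w)) (@mod_wv R n.+1) (S n) (T n)| | ])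
    @ \oo --> 0%E.
Proof.
move=> mv me nzv nze t0 hv he k1 d0 _.
case: k S T k1 => [//|k] S T _.
have M0 : 0 <= M.
  have H0 : (0 <= \int[P]_w (expR (t * ln `|wv 0%N w (ord0, ord0)|))%:E)%E.
    by apply: integral_ge0 => w _; rewrite lee_fin expR_ge0.
  by rewrite -lee_fin; apply: le_trans H0 _; exact: (hv _ _).2.
pose y n := (n.+1%:R : R) `^ 3^-1.
have y0 n : 0 < y n by apply: powR_gt0; rewrite ltr0n.
have y3 n : y n ^+ 3 = n.+1%:R.
  by rewrite -powR_mulrn ?powR_ge0 // -powRrM mulVf // powRr1.
pose a n := delta * y n / k.+1%:R.
have a0 n : 0 < a n by rewrite /a divr_gt0 ?mulr_gt0 ?ltr0n.
pose B n := (2 * M * expR (- (t * a n))) *+ k.+1.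
pose A n := [set w | delta <
      (n.+1%:R : R) `^ (- 3^-1) *
      `| ln `|Zk (we n w) (wv n w) (S n) (T n)|
         - ln `|Zk (mod_we (we n w) (wv n w)) (@mod_wv R n.+1) (S n) (T n)| | ].
have key n : measurable (A n) /\ (P (A n) <= (B n)%:E)%E.
  have Fb : forall i : 'I_k.+1,
      measurable [set w | (a n <= `|ln `|wv n w (S n i)| |)%R] /\
      (P [set w | (a n <= `|ln `|wv n w (S n i)| |)%R] <=
        ((2 * M * expR (- (t * a n))))%:E)%E.
    move=> i.
    have mX : measurable_fun setT (fun w => ln `|wv n w (S n i)|).
      exact: (measurableT_comp (@measurable_ln R)
        (measurableT_comp (@normr_measurable R setT) (mv n (S n i)))).
    exact: (@tail_bound _ _ _ P _ t M (a n) mX t0 (a0 n)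
      (hv n (S n i)).1 (hv n (S n i)).2).
  pose F (j : nat) := [set w | (a n <= `|ln `|wv n w (S n (inord j))| |)%R].
  have mZ : measurable_fun setT (fun w => Zk (we n w) (wv n w) (S n) (T n)).
    exact: (@Zk_meas _ _ _ _ _ (we n) (wv n) (S n) (T n) (mv n) (me n)).
  have mZ' : measurable_fun setT
      (fun w => Zk (mod_we (we n w) (wv n w)) (@mod_wv R n.+1) (S n) (T n)).
    apply: (@Zk_meas _ _ _ _ _ (fun w => mod_we (we n w) (wv n w))
      (fun w => @mod_wv R n.+1)) => [u|u v huv].
    - exact: measurable_cst.
    - exact: (measurable_funM (me n u v huv) (mv n v)).
  have mA : measurable (A n).
    have mL : forall f : Omega -> R, measurable_fun setT f ->
        measurable_fun setT (fun w => ln `|f w|).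
      move=> f mf; exact: (measurableT_comp (@measurable_ln R)
        (measurableT_comp (@normr_measurable R setT) mf)).
    have mD := measurable_funB (mL _ mZ) (mL _ mZ').
    have mG := measurableT_comp (@mulrl_measurable _ setT ((n.+1%:R : R) `^ (- 3^-1)))
      (measurableT_comp (@normr_measurable R setT) mD).
    have := mG measurableT _ (measurable_itv `]delta, +oo[%R); rewrite setTI.
    congr measurable; apply/seteqP; split => w /=; rewrite in_itv /= andbT //.
  split => //.
  have sub : A n `<=` \big[setU/set0]_(j < k.+1) F j.
    move=> w /= Hw; rewrite -bigcup_mkord.
    case: (pselect (exists j : 'I_k.+1, a n <= `|ln `|wv n w (S n j)| |)) => [[j Hj]|Hn].
      by exists (val j) => //=; rewrite /F /= inord_val.
    exfalso.
    have Hle : forall j : 'I_k.+1, `|ln `|wv n w (S n j)| | <= a n.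
      move=> j; apply/ltW; rewrite ltNge; apply/negP => h; apply: Hn; exists j.
      exact: h.
    move: Hw; rewrite /A /= Zk_fact.
    set Z' := Zk (mod_we _ _) _ _ _.
    have Db := diff_bound R k.+1 (fun i => wv n w (S n i)) Z' (fun i => nzv n w (S n i)).
    have Hs : \sum_(i < k.+1) `|ln `|wv n w (S n i)| | <= delta * y n.
      apply: le_trans (ler_sum _ (fun i _ => Hle i)) _.
      by rewrite sumr_const card_ord /a -[(_ / _) *+ _]mulr_natr divfK ?pnatr_eq0.
    rewrite powRN -/(y n) ltNge => /negP; apply.
    rewrite mulrC ler_pdivrMr //.
    exact: le_trans Db Hs.
  have hF : forall j, `I_k.+1 j -> measurable (F j).
    by move=> j _; exact: (Fb (inord j)).1.
  have := @content_subadditive _ _ _ P (A n) F k.+1 hF mA sub.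
  move/le_trans; apply.
  apply: (@le_trans _ _ (\sum_(j < k.+1) ((2 * M * expR (- (t * a n))))%:E)%E).
    by apply: lee_sum => j _; rewrite /F inord_val; exact: (Fb j).2.
  by rewrite sumEFin sumr_const card_ord.
change ((fun n => P (A n)) @ \oo --> 0%E).
have fin n : P (A n) \is a fin_num.
  rewrite ge0_fin_numE ?measure_ge0 //.
  apply: le_lt_trans (probability_le1 P (key n).1) _; exact: ltey.
apply: cvg_EFin; first exact: nearW.
pose beta := t * delta / k.+1%:R.
have beta0 : 0 < beta by rewrite /beta divr_gt0 ?mulr_gt0 ?ltr0n.
pose C := 2 * M * k.+1%:R * 6 / beta ^+ 3.
apply: (@squeeze_cvgr _ _ _ _ (fun n => 0 * (n.+1%:R)^-1) (fun n => C * (n.+1%:R)^-1)).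
- apply: nearW => n /=; apply/andP; split; first by rewrite mul0r fine_ge0 ?measure_ge0.
  apply: (@le_trans _ _ (B n)).
    by rewrite -lee_fin fineK //; exact: (key n).2.
  have ta : t * a n = beta * y n by rewrite /a /beta; ring.
  have Eg : beta ^+ 3 * n.+1%:R / 6 <= expR (t * a n).
    rewrite ta; apply: le_trans (expR_ge1Dxn 2 _); last by rewrite mulr_ge0 ?ltW.
    by rewrite [in X in _ <= X]exprMn y3 (_ : 3`!%:R = 6 :> R) // lerDr.
  rewrite /B /C -mulr_natr expRN.
  have Ep : 0 < beta ^+ 3 * n.+1%:R / 6 by rewrite divr_gt0 ?mulr_gt0 ?exprn_gt0 ?ltr0n.
  have : (expR (t * a n))^-1 <= (beta ^+ 3 * n.+1%:R / 6)^-1.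
    by rewrite lef_pV2 ?posrE ?expR_gt0.
  rewrite invf_div => H.
  have -> : 2 * M * k.+1%:R * 6 / beta ^+ 3 * (n.+1%:R)^-1 =
      (2 * M * k.+1%:R) * (6 / (beta ^+ 3 * n.+1%:R)).
    by rewrite [in RHS]invfM mulrA mulrA.
  rewrite mulrAC; apply: ler_wpM2l; last exact: H.
  by rewrite !mulr_ge0 ?ler0n.
- rewrite -[X in _ --> X](mulr0 (0:R)).
  apply: cvgMr; exact: cvg_harmonic.
- rewrite (_ : 0 = C * 0); last by rewrite mulr0.
  apply: cvgMr; exact: cvg_harmonic.
Qed.
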